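(* On $\mathcal V$ we have $B_2^{(1)}B_2^{(0)}=q\,B_2^{(0)}B_2^{(1)}$.
   Context: Plethystic notation: for a symmetric function $f$ and a rational expression $E$ in $x_1,\dots,x_N,q,t$, $f[E]$ is obtained by writing $f$ as a polynomial in the power sums $p_k$ and replacing each $p_k$ by $E$ with every variable $u$ replaced by $u^k$. Put $X=x_1+\cdots+x_N$ and $X^{tq}=X(1-t)/(1-q)$. $S_\mu$ is the Schur function; $S_{m,n}$ for the partition $(m,n)$, $S_m=S_{(m)}$, $S_0=1$. Let $\mathcal V$ be the $\mathbb Q[q,t]$-linear span of $\{S_\lambda[X^{tq}]:\ell(\lambda)\le2\}$, and define linear operators on $\mathcal V$ by, for $m\ge n\ge0$ (writing $S_k$ for $S_k[X^{tq}]$; products of single-row Schur functions expand into Schur functions of at most two rows): $B_2^{(0)}S_{m,n}[X^{tq}]=-q^{m+1}(1-q^{n+1})S_{m+1}S_{n+1}+q^n(1-q^{m+2})S_{m+2}S_n$, $B_2^{(1)}S_{m,n}[X^{tq}]=q^{m+n+1}\big((1-q^{n+1})S_{m+1}S_{n+1}-(1-q^{m+2})S_{m+2}S_n\big)$. *)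

(* Defs.v *)
From HB Require Import structures.
From mathcomp Require Import all_boot all_order all_algebra.
From mathcomp Require Import mpoly.
Set Implicit Arguments. Unset Strict Implicit. Unset Printing Implicit Defensive.
Import Order.TTheory GRing.Theory.
Local Open Scope ring_scope.

Definition Rqt := {mpoly rat[2]}.
Definition qv : Rqt := 'X_(ord0 : 'I_2).
Definition tv : Rqt := 'X_(lift ord0 (ord0 : 'I_1)).

(* Elements of V are finite formal linear combinations
   sum c_i * S_{(m_i,n_i)}[X^{tq}], encoded as a list of (c_i, (m_i, n_i)),
   with n_i <= m_i.  Two lists represent the same vector iff they have
   the same coefficient at every index (see [coefV]). *)
Definition vecV (R : Type) := seq (R * (nat * nat)).

Section V.
Variable R : comRingType.

Definition coefV (v : vecV R) (ij : nat * nat) : R :=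
  \sum_(p <- v | p.2 == ij) p.1.

Definition scaleV (c : R) (v : vecV R) : vecV R :=
  [seq (c * p.1, p.2) | p <- v].

(* S_a[X^{tq}] * S_b[X^{tq}] = sum_{k=0}^{min(a,b)} S_{(a+b-k,k)}[X^{tq}]
   (Pieri rule; plethysm is a ring morphism). *)
Definition SprodV (a b : nat) : vecV R :=
  [seq (1, (a + b - k, k)%N) | k <- iota 0 (minn a b).+1].

Definition applyV (B : nat -> nat -> vecV R) (v : vecV R) : vecV R :=
  flatten [seq scaleV p.1 (B p.2.1 p.2.2) | p <- v].

Variable q : R.

Definition B20_basis (m n : nat) : vecV R :=
  scaleV (- (q ^+ m.+1 * (1 - q ^+ n.+1))) (SprodV m.+1 n.+1)
  ++ scaleV (q ^+ n * (1 - q ^+ m.+2)) (SprodV m.+2 n).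

Definition B21_basis (m n : nat) : vecV R :=
  scaleV (q ^+ (m + n).+1)
    (scaleV (1 - q ^+ n.+1) (SprodV m.+1 n.+1)
     ++ scaleV (- (1 - q ^+ m.+2)) (SprodV m.+2 n)).

Definition B20 := applyV B20_basis.
Definition B21 := applyV B21_basis.

Definition wfV (v : vecV R) : bool := all (fun p => p.2.2 <= p.2.1)%N v.
End V.

(* Main.v *)
Require Import Defs.
From HB Require Import structures.
From mathcomp Require Import all_boot all_order all_algebra.
From mathcomp Require Import mpoly.
From mathcomp Require Import ring zify.
Import GRing.Theory.
Local Open Scope ring_scope.

Section Proof.
Variable R : comRingType.
Variable q : R.

Definition Lam (g : nat * nat -> R) (u : vecV R) : R := \sum_(p <- u) p.1 * g p.2.

Lemma coefV_Lam v ij : coefV v ij = Lam (fun x => (x == ij)%:R) v.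
Proof.
rewrite /coefV /Lam big_mkcond /=; apply: eq_bigr => p _.
by case: eqP => _; rewrite ?mulr1 ?mulr0.
Qed.

Lemma Lam_cat g u w : Lam g (u ++ w) = Lam g u + Lam g w.
Proof. by rewrite /Lam big_cat. Qed.

Lemma Lam_scale g c u : Lam g (scaleV c u) = c * Lam g u.
Proof.
rewrite /Lam /scaleV big_map mulr_sumr; apply: eq_bigr => p _ /=.
by rewrite mulrA.
Qed.

Lemma Lam_apply g B v :
  Lam g (applyV B v) = \sum_(p <- v) p.1 * Lam g (B p.2.1 p.2.2).
Proof.
elim: v => [|p v IH]; first by rewrite /applyV /= /Lam !big_nil.
rewrite big_cons -IH /applyV /= Lam_cat Lam_scale //.
Qed.

Lemma Lam_Sprod g a b :
  Lam g (SprodV R a b) = \sum_(0 <= k < (minn a b).+1) g (a + b - k, k)%N.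
Proof.
rewrite /Lam /SprodV big_map /index_iota subn0; apply: eq_bigr => k _ /=.
by rewrite mul1r.
Qed.

Definition ind (i j s t : nat) : R := ((i + j == s)%N && (j <= t)%N)%:R.

Lemma sum_eq_nat (N j : nat) :
  \sum_(0 <= k < N) ((k == j)%:R : R) = (j < N)%:R.
Proof.
elim: N => [|N IH]; first by rewrite big_nil ltn0.
rewrite big_nat_recr //= IH ltnS.
by case: (ltngtP j N) => H; rewrite /= ?addr0 ?add0r.
Qed.

Lemma coef_Sprod a b i j :
  Lam (fun x => (x == (i, j))%:R) (SprodV R a b) = ind i j (a + b) (minn a b).
Proof.
rewrite Lam_Sprod /ind.
rewrite (eq_big_nat _ _ (F2 := fun k => ((k == j)%:R * ((i + j == a + b)%N)%:R : R))).
  rewrite -mulr_suml sum_eq_nat -natrM ltnS.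
  by rewrite mulnb andbC.
move=> k /andP [_ Hk].
rewrite xpair_eqE -natrM mulnb.
case: (k =P j) => [Ekj|_]; last by rewrite andbF.
subst k; rewrite andbT.
rewrite /=; congr (_%:R); apply/eqP/eqP; lia.
Qed.

Lemma Lam_apply2 g B C v :
  Lam g (applyV B (applyV C v)) =
  \sum_(p <- v) p.1 * Lam (fun x => Lam g (B x.1 x.2)) (C p.2.1 p.2.2).
Proof. rewrite Lam_apply; exact: (Lam_apply (fun x => Lam g (B x.1 x.2)) C v). Qed.

Definition indf i j := fun x : nat * nat => ((x == (i, j))%:R : R).

Definition h21 i j D k := q^+D.+1 * ((1 - q^+k.+1) * ind i j D.+2 k.+1
   - (1 - q^+(D-k).+2) * ind i j D.+2 k).
Definition h20 i j D k := - (q^+(D-k).+1 * (1 - q^+k.+1)) * ind i j D.+2 k.+1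
   + q^+k * (1 - q^+(D-k).+2) * ind i j D.+2 k.
Definition phi i j D k := (1 - q^+k) * (1 - q^+(D.+2 - k)) * ind i j D.+2 k.

Lemma addSS2 m n : (m.+1 + n.+1 = (m + n).+2)%N.
Proof. by rewrite addSn addnS. Qed.
Lemma addS2 m n : (m.+2 + n = (m + n).+2)%N.
Proof. by rewrite !addSn. Qed.

Lemma coef21 m n i j : (n <= m)%N ->
  Lam (indf i j) (B21_basis q m n) = h21 i j (m + n) n.
Proof.
move=> Hnm; rewrite /B21_basis Lam_scale Lam_cat !Lam_scale /indf !coef_Sprod.
have -> : minn m.+1 n.+1 = n.+1 by apply/minn_idPr; lia.
have -> : minn m.+2 n = n by apply/minn_idPr; lia.
rewrite addSS2 addS2 /h21 addnK. ring.
Qed.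

Lemma coef20 m n i j : (n <= m)%N ->
  Lam (indf i j) (B20_basis q m n) = h20 i j (m + n) n.
Proof.
move=> Hnm; rewrite /B20_basis Lam_cat !Lam_scale /indf !coef_Sprod.
have -> : minn m.+1 n.+1 = n.+1 by apply/minn_idPr; lia.
have -> : minn m.+2 n = n by apply/minn_idPr; lia.
rewrite addSS2 addS2 /h20 addnK. ring.
Qed.

Lemma sum21 a b i j :
  \sum_(0 <= k < (minn a b).+1) Lam (indf i j) (B21_basis q (a + b - k)%N k)
  = \sum_(0 <= k < (minn a b).+1) h21 i j (a + b) k.
Proof.
apply: eq_big_nat => k /andP [_ Hk].
rewrite coef21; last by lia.
by rewrite subnK //; lia.
Qed.

Lemma sum20 a b i j :
  \sum_(0 <= k < (minn a b).+1) Lam (indf i j) (B20_basis q (a + b - k)%N k)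
  = \sum_(0 <= k < (minn a b).+1) h20 i j (a + b) k.
Proof.
apply: eq_big_nat => k /andP [_ Hk].
rewrite coef20; last by lia.
by rewrite subnK //; lia.
Qed.

Lemma point i j D k : (k < D)%N ->
  h21 i j D k + q^+D.+1 * h20 i j D k = q^+D.+1 * (phi i j D k.+1 - phi i j D k).
Proof.
move=> H; rewrite /h21 /h20 /phi.
have -> : (D.+2 - k.+1 = (D - k).+1)%N by lia.
have -> : (D.+2 - k = (D - k).+2)%N by lia.
rewrite !exprS. ring.
Qed.

Lemma tele D N i j : (N <= D)%N ->
  \sum_(0 <= k < N) h21 i j D k
  = q^+D.+1 * phi i j D N - q^+D.+1 * \sum_(0 <= k < N) h20 i j D k.
Proof.
move=> HN.
have E : \sum_(0 <= k < N) h21 i j D k + q^+D.+1 * \sum_(0 <= k < N) h20 i j D k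
         = q^+D.+1 * phi i j D N.
  rewrite mulr_sumr -big_split /=.
  rewrite (eq_big_nat _ _ (F2 := fun k => q^+D.+1 * (phi i j D k.+1 - phi i j D k))).
    rewrite -mulr_sumr telescope_sumr // /phi expr0 subrr !mul0r subr0 //.
  by move=> k /andP [_ Hk]; apply: point; lia.
by rewrite -E addrK.
Qed.

Lemma basis_id m n i j : (n <= m)%N ->
  Lam (fun x => Lam (indf i j) (B21_basis q x.1 x.2)) (B20_basis q m n)
  = q * Lam (fun x => Lam (indf i j) (B20_basis q x.1 x.2)) (B21_basis q m n).
Proof.
move=> Hnm.
rewrite /B20_basis /B21_basis !Lam_cat !Lam_scale !Lam_cat !Lam_scale !Lam_Sprod /=.
rewrite !sum21 !sum20.
have -> : minn m.+1 n.+1 = n.+1 by apply/minn_idPr; lia.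
have -> : minn m.+2 n = n by apply/minn_idPr; lia.
rewrite addSS2 addS2.
have R1 : \sum_(0 <= k < n.+2) h21 i j (m + n).+2 k
  = \sum_(0 <= k < n.+1) h21 i j (m + n).+2 k + h21 i j (m + n).+2 n.+1
  by rewrite big_nat_recr.
have R2 : \sum_(0 <= k < n.+2) h20 i j (m + n).+2 k
  = \sum_(0 <= k < n.+1) h20 i j (m + n).+2 k + h20 i j (m + n).+2 n.+1
  by rewrite big_nat_recr.
rewrite R1 R2.
have Hle : (n.+1 <= (m + n).+2)%N by lia.
rewrite (@tele _ _ i j Hle).
set S := \sum_(0 <= k < n.+1) h20 i j (m + n).+2 k.
rewrite /h21 /h20 /phi.
have -> : ((m + n).+2 - n.+1 = m.+1)%N by lia.
have -> : ((m + n).+2.+2 - n.+1 = m.+3)%N by lia.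
rewrite !exprS !exprD. ring.
Qed.

End Proof.

Theorem mainTheorem10 :
  forall v : vecV Rqt, wfV v ->
  forall ij : nat * nat,
    coefV (B21 qv (B20 qv v)) ij = qv * coefV (B20 qv (B21 qv v)) ij.
Proof.
move=> v wf [i j].
rewrite !coefV_Lam /B21 /B20 !Lam_apply2.
rewrite mulr_sumr; apply: eq_big_seq => p Hp.
have Hnm : (p.2.2 <= p.2.1)%N by move/allP: wf => /(_ p Hp).
rewrite mulrCA; congr (_ * _).
exact: (@basis_id _ qv _ _ i j Hnm).
Qed.
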